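(* Let $N=\{1,\dots,n\}$ with $n\ge 2$ and $\mathcal{D}=\mathbb{R}^n_+$. A rule $R:\mathcal{D}\to\mathbb{R}^n_+$ satisfies scale invariance, downstream impartiality, and upstream invariance if and only if there exists $\alpha=(\alpha_1,\dots,\alpha_{n-1})\in[0,1]^{n-1}$ such that for each $e\in\mathcal{D}$, $$R_i(e)=\alpha_i e_i+\sum_{k<i}\frac{(1-\alpha_k)e_k}{n-k}\quad (i=1,\dots,n-1),\qquad R_n(e)=e_n+\sum_{k<n}\frac{(1-\alpha_k)e_k}{n-k}.$$
   Context: Agents $1,\dots,n$ are located along a linear river, lower index meaning more upstream; agent $i$ has river inflow $e_i\ge 0$, and $e=(e_1,\dots,e_n)\in\mathcal{D}=\mathbb{R}^n_+$. An allocation for $e$ is $x\in\mathbb{R}^n_+$ with $\sum_{i=1}^n x_i=\sum_{i=1}^n e_i$ and $\sum_{i=1}^k x_i\le\sum_{i=1}^k e_i$ for each $k=1,\dots,n-1$. A rule is a map $R:\mathcal{D}\to\mathbb{R}^n_+$ assigning to each $e$ an allocation $R(e)$ for $e$. Axioms: Scale invariance: for each $e\in\mathcal{D}$ and each $\gamma\in\mathbb{R}_+$, $R(\gamma e)=\gamma R(e)$. Upstream invariance: for each $e,e'\in\mathcal{D}$ such that $e_i<e'_i$ for some $i\in N$ and $e_j=e'_j$ for all $j\ne i$, we have $R_k(e)=R_k(e')$ for each $k<i$. Downstream impartiality: for each $e,e'\in\mathcal{D}$ such that $e_i<e'_i$ for some $i\in N$ and $e_j=e'_j$ for all $j\ne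 i$, and for each $k,l>i$ with $e_k=e_l$, we have $R_k(e')-R_k(e)=R_l(e')-R_l(e)$. *)

(* Defs.v *)
From mathcomp Require Import all_boot all_order all_algebra.
From mathcomp Require Import reals.
Set Implicit Arguments. Unset Strict Implicit. Unset Printing Implicit Defensive.
Import Order.TTheory GRing.Theory Num.Theory.
Local Open Scope ring_scope.

(* Agents are indexed by 'I_n, i.e. 0-based: paper agent i is (i-1 : 'I_n).
   Lower index = more upstream. *)

Definition profile (R : realType) (n : nat) := 'I_n -> R.

Definition in_domain (R : realType) (n : nat) (e : profile R n) : Prop :=
  forall i, 0 <= e i.

Definition allocation (R : realType) (n : nat) (e x : profile R n) : Prop :=
  (forall i, 0 <= x i) /\
  \sum_(i < n) x i = \sum_(i < n) e i /\
  (forall k : nat, (k < n.-1)%N ->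
     \sum_(i < n | (i <= k)%N) x i <= \sum_(i < n | (i <= k)%N) e i).

Definition is_rule (R : realType) (n : nat) (rule : profile R n -> profile R n) : Prop :=
  forall e, in_domain e -> allocation e (rule e).

Definition increase_at (R : realType) (n : nat) (e e' : profile R n) (i : 'I_n) : Prop :=
  e i < e' i /\ forall j, j != i -> e j = e' j.

Definition scale_invariance (R : realType) (n : nat) (rule : profile R n -> profile R n) : Prop :=
  forall e (g : R), in_domain e -> 0 <= g ->
    rule (fun i => g * e i) = (fun i => g * rule e i).

Definition upstream_invariance (R : realType) (n : nat) (rule : profile R n -> profile R n) : Prop :=
  forall e e' (i : 'I_n), in_domain e -> in_domain e' -> increase_at e e' i ->
    forall k : 'I_n, (k < i)%N -> rule e k = rule e' k.

Definition downstream_impartiality (R : realType) (n : nat) (rule : profile R n -> profile R n) : Prop :=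
  forall e e' (i : 'I_n), in_domain e -> in_domain e' -> increase_at e e' i ->
    forall k l : 'I_n, (i < k)%N -> (i < l)%N -> e k = e l ->
      rule e' k - rule e k = rule e' l - rule e l.

(* The rule parameterized by alpha (only alpha_1..alpha_{n-1}, i.e. 0-based
   indices < n-1, are used).  With 0-based k, the paper's (n - k) is (n - (k+1)). *)
Definition alpha_rule (R : realType) (n : nat) (alpha : 'I_n -> R) (e : profile R n) : profile R n :=
  fun i =>
    (if (i < n.-1)%N then alpha i * e i else e i)
    + \sum_(k < n | (k < i)%N) (1 - alpha k) * e k / (n - k.+1)%:R.

(* Main.v *)
Require Import Defs.
From mathcomp Require Import all_boot all_order all_algebra.
From mathcomp Require Import reals.
From mathcomp Require Import ring zify.
From Stdlib Require Import FunctionalExtensionality.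
Import Order.TTheory GRing.Theory Num.Theory.
Local Open Scope ring_scope.

Lemma sum_cond_const (R : realType) (m k : nat) (x : R) :
  \sum_(i < m) (if (k <= i)%N then x else 0) = x * (m - k)%:R.
Proof.
elim: m => [|m IH]; first by rewrite big_ord0 sub0n mulr0.
rewrite big_ord_recr /= IH.
case: leqP => h.
- by rewrite subSn // -natr1 mulrDr mulr1.
- have -> : (m.+1 - k = m - k)%N by lia.
  by rewrite addr0.
Qed.

Lemma alpha_rule_sum (R : realType) (n : nat) (alpha : 'I_n -> R) (e : profile R n) :
  \sum_(i < n) alpha_rule alpha e i = \sum_(i < n) e i.
Proof.
rewrite /alpha_rule big_split /=.
under [X in _ + X]eq_bigr => i _ do rewrite big_mkcond.
rewrite exchange_big /=.
under [X in _ + X = _]eq_bigr => k _ do rewrite sum_cond_const.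
rewrite -big_split /=; apply: eq_bigr => k _.
case: ifP => hk.
- rewrite divfK; first by ring.
  rewrite pnatr_eq0; apply/eqP; lia.
- have -> : (n - k.+1 = 0)%N by have := ltn_ord k; lia.
  by rewrite mulr0 addr0.
Qed.

Lemma ar_local (R : realType) (n : nat) (alpha : 'I_n -> R) (e e' : profile R n) (k : 'I_n) :
  (forall j : 'I_n, (j <= k)%N -> e j = e' j) -> alpha_rule alpha e k = alpha_rule alpha e' k.
Proof.
move=> h; rewrite /alpha_rule h //; congr (_ + _); apply: eq_bigr => j hj; by rewrite h // ltnW.
Qed.

Lemma ar_diff (R : realType) (n : nat) (alpha : 'I_n -> R) (e e' : profile R n) (i k : 'I_n) :
  (forall j, j != i -> e j = e' j) -> (i < k)%N ->
  alpha_rule alpha e' k - alpha_rule alpha e k = (1 - alpha i) * (e' i - e i) / (n - i.+1)%:R.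
Proof.
move=> h ik.
have ki : k != i by apply/eqP => kei; rewrite kei ltnn in ik.
rewrite /alpha_rule (h k ki) opprD addrACA subrr add0r -sumrB.
rewrite (bigD1 i) //= big1 ?addr0.
  by ring.
move=> j /andP [_ ji]; by rewrite (h j ji) subrr.
Qed.

Lemma single_change (R : realType) n (rule : profile R n -> profile R n) e e' (i k : 'I_n) :
  upstream_invariance rule -> in_domain e -> in_domain e' ->
  (forall j, j != i -> e j = e' j) -> (k < i)%N -> rule e k = rule e' k.
Proof.
move=> UI de de' eq ki.
case: (ltgtP (e i) (e' i)) => h.
- exact: (UI e e' i de de' (conj h eq) k ki).
- symmetry; apply: (UI e' e i de' de _ k ki); split=> // j /eq -> //.
- have -> : e = e' => //.
  apply: functional_extensionality => j; case: (eqVneq j i) => [->|/eq] //.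
Qed.

Lemma locality (R : realType) n (rule : profile R n -> profile R n) (k : 'I_n) e e' :
  upstream_invariance rule -> in_domain e -> in_domain e' ->
  (forall j : 'I_n, (j <= k)%N -> e j = e' j) -> rule e k = rule e' k.
Proof.
move=> UI de de' eq.
pose P (d : nat) := fun j : 'I_n => if (j < d)%N then e' j else e j.
have dP d : in_domain (P d) by move=> j; rewrite /P; case: ifP.
have step d : rule (P d) k = rule e k.
  elim: d => [|d IH].
  - by congr (rule _ k); apply: functional_extensionality => j; rewrite /P ltn0.
  - rewrite -IH.
    case: (ltnP d n) => dn.
    + pose i := Ordinal dn.
      case: (leqP d k) => dk.
      * congr (rule _ k); apply: functional_extensionality => j.
        rewrite /P ltnS leq_eqVlt; case: eqP => [jd|] //=.
        by rewrite jd ltnn; symmetry; apply: eq; rewrite jd.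
      * apply: (@single_change R n rule _ _ i k UI (dP _) (dP _)) => //.
        move=> j ji; rewrite /P ltnS leq_eqVlt.
        have -> : (j == d :> nat) = false.
          by apply/eqP => jd; move/eqP: ji; apply; apply: val_inj.
        by [].
    + congr (rule _ k); apply: functional_extensionality => j.
      rewrite /P (leq_trans (ltn_ord j) dn) (leq_trans (ltn_ord j) (leqW dn)) //.
have := step n.
have -> : P n = e' by apply: functional_extensionality => j; rewrite /P ltn_ord.
by move=> ->.
Qed.

Definition delta (R : realType) {n} (k : 'I_n) : profile R n :=
  fun j => if j == k then 1 else 0.

Lemma delta_dom (R : realType) {n} (k : 'I_n) : in_domain (delta R k).
Proof. by move=> i; rewrite /delta; case: ifP. Qed.

Lemma forward (R : realType) (n : nat) (rule : profile R n -> profile R n) :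
  is_rule rule -> scale_invariance rule -> downstream_impartiality rule ->
  upstream_invariance rule ->
  forall e, in_domain e -> rule e = alpha_rule (fun k => rule (delta R k) k) e.
Proof.
move=> hr SI DI UI.
pose alpha := fun k => rule (delta R k) k.
rewrite -/alpha.
pose F e j := rule e j - alpha_rule alpha e j.
have sumF e : in_domain e -> \sum_j F e j = 0.
  move=> de; rewrite sumrB alpha_rule_sum; have [_ [-> _]] := hr e de; exact: subrr.
have Floc e e' (j : 'I_n) : in_domain e -> in_domain e' ->
    (forall i : 'I_n, (i <= j)%N -> e i = e' i) -> F e j = F e' j.
  by move=> de de' h; rewrite /F (@locality R n rule j e e' UI de de' h) (@ar_local R n alpha e e' j h).
have core (j : 'I_n) : (forall j' : 'I_n, (j' < j)%N -> forall e, in_domain e -> F e j' = 0) ->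
    forall e, in_domain e -> F e j = 0.
  move=> IH e de.
  case: (ltnP j n.-1) => hj; last first.
    have := sumF e de; rewrite (bigD1 j) //= big1 ?addr0 // => i ij.
    apply: IH de.
    have := ltn_ord i; have := ltn_ord j.
    move/eqP: ij => ij.
    have : (i : nat) <> j by move=> h; apply: ij; apply: val_inj.
    lia.
  pose E := fun i : 'I_n => if (i <= j)%N then e i else e j.
  have dE : in_domain E by move=> i; rewrite /E; case: ifP.
  have -> : F e j = F E j by apply: Floc => // i hi; rewrite /E hi.
  pose G d := fun i : 'I_n => if (i < d)%N then 0 else E i.
  have dG d : in_domain (G d) by move=> i; rewrite /G; case: ifP.
  have hG d : (d <= j)%N -> F (G d) j = F E j.
    elim: d => [|d IHd] hd.
      by congr (F _ j); apply: functional_extensionality => i; rewrite /G ltn0.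
    rewrite -(IHd (ltnW hd)).
    have dn : (d < n)%N by apply: ltn_trans hd (ltn_ord j).
    pose i := Ordinal dn.
    have Gi : G d i = e i by rewrite /G /= ltnn /E (ltnW hd).
    have G1i : G d.+1 i = 0 by rewrite /G /= ltnSn.
    have diff : forall i' : 'I_n, i' != i -> G d.+1 i' = G d i'.
      move=> i' hi'; rewrite /G ltnS leq_eqVlt.
      have -> : (i' == d :> nat) = false.
        by apply/eqP => jd; move/eqP: hi'; apply; apply: val_inj.
      by [].
    case: (eqVneq (e i) 0) => ei0.
      congr (F _ j); apply: functional_extensionality => i'.
      case: (eqVneq i' i) => [->|/diff //]; by rewrite Gi G1i ei0.
    have inc : increase_at (G d.+1) (G d) i.
      split; last by move=> j' /diff.
      by rewrite Gi G1i lt_def ei0 de.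
    pose dl k := F (G d) k - F (G d.+1) k.
    have d0 : forall k : 'I_n, (k < j)%N -> dl k = 0.
      by move=> k hk; rewrite /dl !IH ?subrr.
    have dc : forall k : 'I_n, (j <= k)%N -> dl k = dl j.
      move=> k hk.
      have eqk : forall k, dl k = (rule (G d) k - rule (G d.+1) k)
          - (alpha_rule alpha (G d) k - alpha_rule alpha (G d.+1) k).
        by move=> k'; rewrite /dl /F; ring.
      have Gkj : G d.+1 k = G d.+1 j.
        rewrite /G ltnNge (leq_trans hd hk) ltnNge hd /= /E leqnn.
        case: ifP => // kj.
        have -> : k = j by apply: val_inj; apply/eqP; rewrite eqn_leq kj hk.
        by [].
      rewrite !eqk (DI _ _ i (dG d.+1) (dG d) inc k j (leq_trans hd hk) hd Gkj).
      by rewrite (@ar_diff R n alpha _ _ i k diff) ?(@ar_diff R n alpha _ _ i j diff) //= (leq_trans hd hk).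
    have sdl : \sum_k dl k = 0.
      by rewrite sumrB sumF // sumF // subrr.
    have dlj : dl j = 0.
      move: sdl.
      rewrite (eq_bigr (fun k : 'I_n => if (j <= k)%N then dl j else 0)); last first.
        by move=> k _; case: leqP => h; [exact: dc | exact: d0].
      rewrite sum_cond_const => /eqP; rewrite mulf_eq0 pnatr_eq0 => /orP [/eqP //|].
      by have := ltn_ord j; lia.
    by apply/eqP; rewrite eq_sym -subr_eq0; apply/eqP.
  rewrite -(hG j (leqnn j)).
  pose H := fun i => e j * delta R j i.
  have dH : in_domain H by move=> i; rewrite /H mulr_ge0 // delta_dom.
  rewrite (Floc _ H) //; last first.
    move=> i hi; rewrite /G /H /delta.
    case: (ltnP i j) => h.
      have -> : (i == j) = false by apply/eqP => ij; rewrite ij ltnn in h.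
      by rewrite mulr0.
    have -> : i = j by apply: val_inj; apply/eqP; rewrite eqn_leq hi h.
    by rewrite eqxx mulr1 /E leqnn.
  rewrite /F /H (SI (delta R j) (e j) (delta_dom R j) (de j)).
  rewrite /alpha_rule hj big1 => [|k hk].
    by rewrite /delta eqxx mulr1 addr0 /alpha mulrC subrr.
  rewrite /delta.
  have -> : (k == j) = false by apply/eqP => kj; rewrite kj ltnn in hk.
  by rewrite mulr0 mulr0 mul0r.
have all0 : forall m (j : 'I_n), (j <= m)%N -> forall e, in_domain e -> F e j = 0.
  elim=> [|m IHm] j hj; apply: core => j' hj'.
    by have := leq_trans hj' hj.
  by apply: IHm; rewrite -ltnS; exact: leq_trans hj' hj.
move=> e de; apply: functional_extensionality => j.
by apply/eqP; rewrite -subr_eq0; apply/eqP; exact: (all0 j j (leqnn _) e de).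
Qed.

Theorem theorem4 (R : realType) (n : nat) (rule : profile R n -> profile R n) :
  (2 <= n)%N -> is_rule rule ->
  (scale_invariance rule /\ downstream_impartiality rule /\ upstream_invariance rule
   <->
   exists alpha : 'I_n -> R,
     (forall k : 'I_n, (k < n.-1)%N -> 0 <= alpha k <= 1) /\
     forall e, in_domain e -> rule e = alpha_rule alpha e).
Proof.
move=> n2 hr; split.
- move=> [SI [DI UI]]; exists (fun k => rule (delta R k) k); split; last exact: forward.
  move=> k hk.
  have [h0 [_ hp]] := hr _ (delta_dom R k).
  apply/andP; split; first exact: h0.
  have := hp k hk.
  rewrite (bigD1 k) //= [X in _ <= X](bigD1 k) //= [X in _ <= _ + X]big1; last first.
    by move=> i /andP [_ ik]; rewrite /delta (negbTE ik).
  rewrite /delta eqxx addr0 => h; apply: le_trans h; rewrite lerDl.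
  by apply: sumr_ge0 => i _; exact: h0.
- move=> [alpha [_ ha]]; split; [|split].
  + move=> e g de hg.
    have dg : in_domain (fun i => g * e i) by move=> i; rewrite mulr_ge0.
    rewrite !ha //; apply: functional_extensionality => i.
    rewrite /alpha_rule mulrDr mulr_sumr; congr (_ + _).
      by case: ifP => _; ring.
    by apply: eq_bigr => k _; ring.
  + move=> e e' i de de' [lt eq] k l ik il _.
    by rewrite !ha // (@ar_diff R n alpha _ _ i k eq) // (@ar_diff R n alpha _ _ i l eq).
  + move=> e e' i de de' [lt eq] k ki.
    rewrite !ha //; apply: ar_local => j hj; apply: eq.
    by apply/eqP => ji; rewrite ji in hj; have := leq_ltn_trans hj ki; rewrite ltnn.
Qed.
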